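(* Let $G$ be a finite group, $N\trianglelefteq G$, $\theta\in\mathrm{Irr}(N)$ and $P\in\mathrm{Syl}_p(G)$. (a) If $\chi\in\mathrm{Irr}^{\mathrm{rel}}_{p'}(G|\theta)$, then $\chi_N$ has some $P$-invariant irreducible constituent, any two such $P$-invariant irreducible constituents are $\mathbf N_G(P)$-conjugate, and these $P$-invariant constituents extend to $NP$. (b) Suppose that $N\subseteq M\trianglelefteq G$, let $\eta\in\mathrm{Irr}(M|\theta)$ and $\chi\in\mathrm{Irr}(G|\eta)$. Then $\chi\in\mathrm{Irr}^{\mathrm{rel}}_{p'}(G|\theta)$ if and only if $\chi\in\mathrm{Irr}^{\mathrm{rel}}_{p'}(G|\eta)$ and $\eta\in\mathrm{Irr}^{\mathrm{rel}}_{p'}(M|\theta)$.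
   Context: $p$ is a prime. For $N\trianglelefteq G$ and $\theta\in\mathrm{Irr}(N)$, $\mathrm{Irr}^{\mathrm{rel}}_{p'}(G|\theta)$ is the set of $\chi\in\mathrm{Irr}(G|\theta)$ (irreducible characters of $G$ whose restriction to $N$ has $\theta$ as a constituent) such that $p$ does not divide $\chi(1)/\theta(1)$. *)

(* Defs.v *)
From mathcomp Require Import all_boot all_order all_algebra all_fingroup all_solvable all_field all_character.
Set Implicit Arguments. Unset Strict Implicit. Unset Printing Implicit Defensive.
Import GRing.Theory Num.Theory.
Local Open Scope ring_scope.

(* chi \in Irr^rel_{p'}(G | theta) for chi : 'CF(G) irreducible, theta : 'CF(N) irreducible:
   theta is a constituent of chi_N and p does not divide chi(1)/theta(1)
   (this ratio is a natural number whenever theta is a constituent of chi_N). *)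
Definition irr_rel_p' (gT : finGroupType) (p : nat) (G N : {group gT})
    (theta : 'CF(N)) (chi : 'CF(G)) : bool :=
  ('[ 'Res[N] chi, theta] != 0) &&
  ~~ (p %| Num.truncn (chi 1%g / theta 1%g))%N.

(* Main.v *)
Require Import Defs.
From mathcomp Require Import all_boot all_order all_algebra all_fingroup all_solvable all_field all_character.
Set Implicit Arguments. Unset Strict Implicit. Unset Printing Implicit Defensive.
Import GRing.Theory Num.Theory.
Local Open Scope ring_scope.
Lemma pnat_dvd_p (p n : nat) : p.-nat n -> n != 1%N -> (p %| n)%N.
Proof.
move=> pn; rewrite -(part_pnat_id pn) p_part.
by case: (logn p n) => [|k] //= _; rewrite expnS dvdn_mulr.
Qed.

Lemma conjg_Iirr1 (gT : finGroupType) (L : {group gT}) (j : Iirr L) :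
  conjg_Iirr j 1%g = j.
Proof. by apply: irr_inj; rewrite conjg_IirrE cfConjgJ1. Qed.

Lemma orbit_sum (gT : finGroupType) (p : nat) (H L : {group gT})
   (S : {set Iirr L}) (w : Iirr L -> nat) :
  prime p -> (L <| H)%g -> p.-nat #|H : L|%g ->
  (forall j x, j \in S -> x \in H -> conjg_Iirr j x \in S) ->
  (forall j x, x \in H -> w (conjg_Iirr j x) = w j) ->
  (forall j, j \in S -> H \subset 'I['chi_j]%g -> (p %| w j)%N) ->
  (p %| \sum_(j in S) w j)%N.
Proof.
move=> pr_p nsLH pHL stS stw hfix.
pose P := [set cfclass_Iirr H j | j in S].
have covS : cover P = S.
  apply/setP => k; apply/bigcupP/idP.
    by case=> A /imsetP[j jS ->] /imsetP[x Hx ->]; apply: stS.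
  move=> kS; exists (cfclass_Iirr H k); first exact: imset_f.
  by apply/imsetP; exists 1%g; rewrite ?group1 ?conjg_Iirr1.
have tiP : trivIset P.
  apply/trivIsetP => A B /imsetP[j1 _ ->] /imsetP[j2 _ ->] neq.
  apply/pred0P => k /=; apply/negbTE/negP => /andP[k1 k2].
  move: neq; rewrite -(eqP (_ : cfclass_Iirr H k == cfclass_Iirr H j1)).
    by rewrite -(eqP (_ : cfclass_Iirr H k == cfclass_Iirr H j2)) ?eqxx // eq_cfclass_IirrE.
  by rewrite eq_cfclass_IirrE.
rewrite -covS big_trivIset //; apply: dvdn_sum => A /imsetP[j jS ->].
have -> : (\sum_(k in cfclass_Iirr H j) w k = #|cfclass_Iirr H j| * w j)%N.
  by rewrite -sum_nat_const; apply: eq_bigr => k /imsetP[x Hx ->]; apply: stw.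
rewrite card_cfclass_Iirr //.
have [h1|h1] := eqVneq #|H : 'I_H['chi_j]|%g 1%N.
  rewrite h1 mul1n; apply: hfix => //.
  by move: h1 => /eqP; rewrite indexg_eq1 subsetI => /andP[].
apply: dvdn_mulr; apply: pnat_dvd_p h1.
apply: pnat_dvd pHL; apply: indexgS.
by rewrite subsetI normal_sub // sub_inertia.
Qed.
Lemma prime_over_inv (gT : finGroupType) (p : nat) (L N : {group gT}) (t : Iirr N) (j : Iirr L) :
  (N <| L)%g -> #|L : N|%g = p -> prime p -> L \subset 'I['chi_t]%g ->
  t \in irr_constt ('Res[N] 'chi_j) -> 'Res[N] 'chi_j = 'chi_t.
Proof.
move=> nsNL iLN pr_p IL tj.
have Hcl := Clifford_Res_sum_cfclass nsNL tj.
rewrite cfclass_invariant // big_seq1 in Hcl.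
have [/irrP[k Hk] | [c injc Hc]] := cfRes_prime_irr_cases j nsNL iLN pr_p.
  move: tj; rewrite irr_consttE Hk cfdot_irr.
  by have [->|ne] := eqVneq k t; rewrite ?eqxx.
have ci i : c i = t.
  have : '['Res[N] 'chi_j, 'chi_(c i)] = 1.
    rewrite Hc cfdot_suml (bigD1 i) //= cfdot_irr eqxx big1 ?addr0 // => k ki.
    by rewrite cfdot_irr (inj_eq injc) (negbTE ki).
  rewrite {1}Hcl cfdotZl cfdot_irr.
  by have [->|ne] := eqVneq t (c i) => //; rewrite mulr0 => /eqP; rewrite eq_sym oner_eq0.
pose i0 := Ordinal (prime_gt0 pr_p); pose i1 := Ordinal (prime_gt1 pr_p).
have := injc i0 i1; rewrite !ci => /(_ erefl) /(congr1 val) //.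
Qed.

Lemma ext_p (gT : finGroupType) (p : nat) (H : {group gT}) : prime p ->
  forall (N : {group gT}) (t : Iirr N) (psi : 'CF(H)),
  (N <| H)%g -> (p.-group (H / N))%g -> H \subset 'I['chi_t]%g ->
  psi \is a character -> ~~ (p %| Num.truncn '['Res[N] psi, 'chi_t])%N ->
  exists k : Iirr H, 'Res[N] 'chi_k = 'chi_t.
Proof.
move=> pr_p N; move: {2}#|H : N|%g.+1 (ltnSn #|H : N|%g) => m.
elim: m N => // m IHm N; rewrite ltnS => le_m t psi nsNH pHN IH psiC ndiv.
have [sNH nNH] := andP nsNH.
have [/val_inj eqNH | neNH] := eqsVneq N H.
  by subst N; exists t; rewrite cfRes_id.
have ntHN : (H / N)%g != 1%g.
  rewrite quotient_neq1 // properEneq sNH andbT; exact: neNH.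
have [_ _ [m0 cHN]] := pgroup_pdiv pHN ntHN.
have lg1 : (1 <= logn p #|(H / N)%g|)%N by rewrite cHN pfactorK.
have [Q [sQ nsQ cQ]] := @normal_pgroup p _ 1 _ _ pHN (normal_refl _) lg1.
pose L := (coset N @*^-1 Q)%G.
have sNL : N \subset L := sub_cosetpre Q.
have nsLH : (L <| H)%g by rewrite -(quotientGK nsNH) cosetpre_normal.
have sLH := normal_sub nsLH.
have nsNL : (N <| L)%g := normalS sNL sLH nsNH.
have iLN : #|L : N|%g = p.
  by rewrite -card_quotient ?normal_norm // cosetpreK cQ expn1.
have pHNn : p.-nat #|H : N|%g by rewrite -card_quotient.
have pHL : p.-nat #|H : L|%g by apply: pnat_dvd pHNn; apply: indexgS.
pose S := [set j : Iirr L | 'Res[N] 'chi_j == 'chi_t].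
pose w j := Num.truncn '['Res[L] psi, 'chi[L]_j].
have wE j : '['Res[L] psi, 'chi[L]_j] = (w j)%:R.
  by rewrite truncnK ?Cnat_cfdot_char ?cfRes_char ?irr_char.
have sumE : Num.truncn '['Res[N] psi, 'chi_t] = (\sum_(j in S) w j)%N.
  rewrite -(cfResRes _ sNL sLH) {1}(cfun_sum_cfdot ('Res[L] psi)).
  rewrite linear_sum cfdot_suml (bigID (mem S)) /= [X in _ + X]big1 ?addr0.
    rewrite (eq_bigr (fun j => (w j)%:R)) ; first by rewrite -natr_sum natrK.
    move=> j.
    rewrite inE => /eqP jS.
    by rewrite [X in '[X, _]]linearZ /= cfdotZl jS cfnorm_irr mulr1 wE.
  move=> j; rewrite inE => jS; rewrite [X in '[X, _]]linearZ /= cfdotZl.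
  have /eqP -> : '['Res[N] 'chi_j, 'chi_t] == 0; last by rewrite mulr0.
  apply: contraR jS; rewrite -irr_consttE => tj.
  by rewrite (prime_over_inv nsNL iLN pr_p _ tj) // (subset_trans sLH IH).
rewrite sumE in ndiv.
case: (pickP (fun j => [&& j \in S, H \subset 'I['chi_j]%g & ~~ (p %| w j)%N])) => [j|none].
  case/and3P => jS IHj ndj.
  have [k Hk] : exists k : Iirr H, 'Res[L] 'chi_k = 'chi_j.
    apply: (IHm L _ j psi) => //.
    - rewrite -(Lagrange_index sLH sNL) iLN in le_m.
      by apply: leq_trans le_m; rewrite -[X in (X < _)%N]muln1 ltn_pmul2l ?prime_gt1.
    - by rewrite /pgroup card_quotient ?normal_norm.
  exists k; rewrite -(cfResRes _ sNL sLH) Hk.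
  by move: jS; rewrite inE => /eqP.
case/negP: ndiv; apply: (orbit_sum pr_p nsLH pHL).
- move=> j x; rewrite !inE => /eqP jS Hx.
  rewrite conjg_IirrE -(cfConjgRes _ nsLH nsNH Hx) jS.
  by rewrite inertiaJ ?(subsetP IH).
- by move=> j x Hx; rewrite /w conjg_IirrE cfdot_Res_conjg.
- move=> j jS IHj; move: (none j); rewrite jS IHj /=.
  by move/negbT; rewrite negbK.
Qed.

Lemma parta (gT : finGroupType) (p : nat) (G N P : {group gT})
    (pr_p : prime p) (nNG : (N <| G)%g) (sylP : P \in ('Syl_p(G))%g) (t : Iirr N) :
  (forall i : Iirr G, irr_rel_p' p 'chi_t 'chi[G]_i ->
     [/\ exists2 u : Iirr N, u \in irr_constt ('Res[N] 'chi_i) &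
           forall x, x \in P -> ('chi_u ^ x)%CF = 'chi_u,
         forall u1 u2 : Iirr N,
           u1 \in irr_constt ('Res[N] 'chi_i) ->
           (forall x, x \in P -> ('chi_u1 ^ x)%CF = 'chi_u1) ->
           u2 \in irr_constt ('Res[N] 'chi_i) ->
           (forall x, x \in P -> ('chi_u2 ^ x)%CF = 'chi_u2) ->
           exists2 y, y \in ('N_G(P))%g & 'chi_u2 = ('chi_u1 ^ y)%CF
       & forall u : Iirr N,
           u \in irr_constt ('Res[N] 'chi_i) ->
           (forall x, x \in P -> ('chi_u ^ x)%CF = 'chi_u) ->
           exists j : Iirr (N <*> P)%G, 'Res[N] 'chi_j = 'chi_u]).
Proof.
move=> i /andP[ti0 ndiv].
have ti : t \in irr_constt ('Res[N] 'chi_i) by rewrite irr_consttE.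
have [sNG nNG'] := andP nNG.
rewrite inE in sylP; have sPG := pHall_sub sylP.
have nNP : P \subset 'N(N)%g := subset_trans sPG nNG'.
pose e := Num.truncn '['Res[N] 'chi_i, 'chi_t].
have eE : '['Res[N] 'chi_i, 'chi_t] = e%:R.
  by rewrite truncnK ?Cnat_cfdot_char ?cfRes_char ?irr_char.
pose T := ('I_G['chi_t])%G.
have Hcl := Clifford_Res_sum_cfclass nNG ti.
have deg : 'chi_i 1%g = (e * #|G : T|%g)%:R * 'chi_t 1%g.
  rewrite -(cfRes1 N) {1}Hcl cfunE sum_cfunE eE natrM -mulrA; congr (_ * _).
  rewrite -size_cfclass.
  rewrite mulr_natl -[size _]card_ord big_tnth -sumr_const; apply: eq_bigr => k _.
  by have /cfclassP[y Gy ->]:=  mem_tnth k (in_tuple _); rewrite cfConjg1.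
rewrite deg mulfK ?irr1_neq0 // natrK Euclid_dvdM // negb_or in ndiv.
case/andP: ndiv => nde ndT.
have consttE u : u \in irr_constt ('Res[N] 'chi_i) ->
    exists2 y, y \in G & 'chi_u = ('chi_t ^ y)%CF.
  move=> uc; apply/cfclassP; apply: contraLR uc => nu.
  rewrite irr_consttE negbK Hcl cfdotZl cfdot_suml big1_seq ?mulr0 // => xi.
  case/andP=> _ /cfclassP[y Gy ->]; rewrite -conjg_IirrE cfdot_irr.
  case: eqP => // equ; case/cfclassP: nu; exists y => //.
  by rewrite -equ conjg_IirrE.
have constt_conj y : y \in G -> conjg_Iirr t y \in irr_constt ('Res[N] 'chi_i).
  by move=> Gy; rewrite irr_consttE conjg_IirrE cfdot_Res_conjg.
have cfdot_u u : u \in irr_constt ('Res[N] 'chi_i) ->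
    '['Res[N] 'chi_i, 'chi_u] = e%:R.
  by case/consttE => y Gy ->; rewrite cfdot_Res_conjg.
split.
- have [Q sylQT] := Sylow_exists p T.
  have sQT := pHall_sub sylQT.
  have sylQ : (p.-Sylow(G) Q)%g.
    case/and3P: sylQT => _ pQ pTQ.
    apply/and3P; split; first exact: subset_trans sQT (subsetIl _ _).
      by [].
    by rewrite -(Lagrange_index (subsetIl G _) sQT) pnatM pTQ andbT p'natE.
  have [x Gx defQ] := Sylow_trans sylP sylQ.
  exists (conjg_Iirr t x^-1); first by apply: constt_conj; rewrite groupV.
  move=> z Pz; rewrite conjg_IirrE.
  have Gz := subsetP sPG z Pz.
  rewrite -(cfConjgM _ nNG) ?groupV //.
  have -> : (x^-1 * z = z ^ x * x^-1)%g by rewrite conjgE !mulgA mulgK.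
  rewrite (cfConjgM _ nNG) ?groupV ?groupJ //.
  have : (z ^ x)%g \in T by rewrite (subsetP sQT) // defQ memJ_conjg.
  by rewrite inE => /andP[_ /inertiaJ ->].
- move=> u1 u2 u1c Pu1 u2c Pu2.
  have [a Ga Ea] := consttE u1 u1c; have [b Gb Eb] := consttE u2 u2c.
  have [g Gg Eg] : exists2 g, g \in G & 'chi_u2 = ('chi_u1 ^ g)%CF.
    have Gg : (a^-1 * b)%g \in G by rewrite groupM ?groupV.
    by exists (a^-1 * b)%g; rewrite // Ea Eb -(cfConjgM _ nNG Ga Gg) mulKVg.
  pose T1 := ('I_G['chi_u1])%G.
  have IP1 : P \subset 'I['chi_u1]%g.
    by apply/subsetP => x Px; rewrite inE (subsetP nNP) // Pu1 ?eqxx.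
  have IP2 : P \subset 'I['chi_u2]%g.
    by apply/subsetP => x Px; rewrite inE (subsetP nNP) // Pu2 ?eqxx.
  have nNg : g \in 'N(N)%g := subsetP nNG' g Gg.
  have sPgT1 : (P :^ g^-1)%g \subset T1.
    rewrite subsetI; apply/andP; split.
      by rewrite sub_conjgV conjGid.
    by rewrite sub_conjgV conjg_inertia // -Eg.
  have sPT1 : P \subset T1 by rewrite subsetI sPG IP1.
  have sT1G : T1 \subset G := subsetIl _ _.
  have syl1 : (p.-Sylow(T1) P)%g := pHall_subl sPT1 sT1G sylP.
  have syl2 : (p.-Sylow(T1) (P :^ g^-1)%G)%g.
    by apply: pHall_subl sPgT1 sT1G _; rewrite pHallJ ?groupV.
  have [t1 T1t1 Et1] := Sylow_trans syl1 syl2.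
  exists (t1 * g)%g.
    rewrite in_setI groupM ?Gg ?(subsetP sT1G t1 T1t1) //=; apply/normP.
    by rewrite conjsgM -Et1 /= conjsgKV.
  rewrite Eg (cfConjgM _ nNG) ?Gg ?(subsetP sT1G t1 T1t1) //.
  by move: T1t1; rewrite inE => /andP[_ /inertiaJ ->].
- move=> u uc Pu.
  have nsNH : (N <| N <*> P)%g by rewrite normalYl.
  have sHG : (N <*> P)%G \subset G by rewrite join_subG sNG.
  apply: (@ext_p _ p (N <*> P)%G pr_p N u ('Res[(N <*> P)%G] 'chi_i)) => //.
  + by rewrite quotientYidl // quotient_pgroup // (pHall_pgroup sylP).
  + rewrite join_subG sub_inertia /=; apply/subsetP => x Px.
    by rewrite inE (subsetP nNP) // Pu ?eqxx.
  + by rewrite cfRes_char ?irr_char.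
  + by rewrite cfResRes ?joing_subl // cfdot_u // natrK.
Qed.
Lemma partb (gT : finGroupType) (p : nat) (G N : {group gT})
    (pr_p : prime p) (nNG : (N <| G)%g) (t : Iirr N) :
  (forall (M : {group gT}) (e : Iirr M) (i : Iirr G),
     N \subset M -> (M <| G)%g ->
     t \in irr_constt ('Res[N] 'chi_e) ->
     e \in irr_constt ('Res[M] 'chi_i) ->
     irr_rel_p' p 'chi_t 'chi[G]_i =
       irr_rel_p' p 'chi_e 'chi[G]_i && irr_rel_p' p 'chi_t 'chi[M]_e).
Proof.
move=> M e i sNM nsMG te ei.
have nsNM : (N <| M)%g := normalS sNM (normal_sub nsMG) nNG.
have [n Hn] := dvdn_constt_Res1_irr1 nsMG ei.
have [m Hm] := dvdn_constt_Res1_irr1 nsNM te.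
have ti : t \in irr_constt ('Res[N] 'chi_i).
  rewrite -(cfResRes _ sNM (normal_sub nsMG)).
  by apply: (constt_Res_trans _ ei) te; rewrite cfRes_char ?irr_char.
rewrite /irr_rel_p' -!irr_consttE ti ei te /=.
have r1 : 'chi_i 1%g / 'chi_e 1%g = n%:R by rewrite Hn mulfK ?irr1_neq0.
have r2 : 'chi_e 1%g / 'chi_t 1%g = m%:R by rewrite Hm mulfK ?irr1_neq0.
have r3 : 'chi_i 1%g / 'chi_t 1%g = (n * m)%:R.
  by rewrite natrM -r1 -r2 mulrA divfK ?irr1_neq0.
by rewrite r1 r2 r3 !natrK Euclid_dvdM // negb_or.
Qed.
Theorem lemma4p3 (gT : finGroupType) (p : nat) (G N P : {group gT})
    (pr_p : prime p) (nNG : (N <| G)%g) (sylP : P \in ('Syl_p(G))%g) (t : Iirr N) :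
  (* (a) *)
  (forall i : Iirr G, irr_rel_p' p 'chi_t 'chi[G]_i ->
     [/\ exists2 u : Iirr N, u \in irr_constt ('Res[N] 'chi_i) &
           forall x, x \in P -> ('chi_u ^ x)%CF = 'chi_u,
         forall u1 u2 : Iirr N,
           u1 \in irr_constt ('Res[N] 'chi_i) ->
           (forall x, x \in P -> ('chi_u1 ^ x)%CF = 'chi_u1) ->
           u2 \in irr_constt ('Res[N] 'chi_i) ->
           (forall x, x \in P -> ('chi_u2 ^ x)%CF = 'chi_u2) ->
           exists2 y, y \in ('N_G(P))%g & 'chi_u2 = ('chi_u1 ^ y)%CF
       & forall u : Iirr N,
           u \in irr_constt ('Res[N] 'chi_i) ->
           (forall x, x \in P -> ('chi_u ^ x)%CF = 'chi_u) ->
           exists j : Iirr (N <*> P)%G, 'Res[N] 'chi_j = 'chi_u]) /\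
  (* (b) *)
  (forall (M : {group gT}) (e : Iirr M) (i : Iirr G),
     N \subset M -> (M <| G)%g ->
     t \in irr_constt ('Res[N] 'chi_e) ->
     e \in irr_constt ('Res[M] 'chi_i) ->
     irr_rel_p' p 'chi_t 'chi[G]_i =
       irr_rel_p' p 'chi_e 'chi[G]_i && irr_rel_p' p 'chi_t 'chi[M]_e).
Proof.
split; first exact: parta.
exact: partb.
Qed.
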